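(* Let $n\in\mathbb{N}$ and suppose $0<y_{\ell}<1$ and $0<q_{\ell}<1$ for all $1\le\ell\le n$. Then the function \[ F(x)=\prod_{\ell=1}^{n}\frac{\exp\left(\frac{x^{2}}{\log q_{\ell}^{4}}\right)}{\left(y_{\ell}e^{ix};q_{\ell}\right)_{\infty}},\qquad x\in\mathbb{R}, \] is a positive definite function. Furthermore, for all $m\in\mathbb{N}$ and all $x_{1},\dots,x_{m}\in\mathbb{R}$, the matrices \[ \left(\prod_{\ell=1}^{n}\frac{\exp\left(\frac{(x_{j}-x_{k})^{2}}{\log q_{\ell}^{4}}\right)}{\left(y_{\ell}e^{i(x_{j}-x_{k})};q_{\ell}\right)_{\infty}}\right)_{j,k=1}^{m} \] are positive semidefinite. In particular, \[ \prod_{\ell=1}^{n}\frac{\left(y_{\ell};q_{\ell}\right)_{\infty}}{\left|\left(y_{\ell}e^{ix};q_{\ell}\right)_{\infty}\right|}\exp\left(\frac{x^{2}}{\log q_{\ell}^{4}}\right)\le1,\qquad x\in\mathbb{R}. \]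
   Context: For $0<q<1$ and $a\in\mathbb{C}$, $(a;q)_{\infty}=\prod_{k=0}^{\infty}(1-aq^{k})$. Here $\log q^{4}=4\log q$. A continuous function $f:\mathbb{R}\to\mathbb{C}$ with $f(0)>0$ is called positive definite if for every $n\in\mathbb{N}$ and all $x_{1},\dots,x_{n}\in\mathbb{R}$ the matrix $(f(x_{j}-x_{k}))_{j,k=1}^{n}$ is positive semidefinite, i.e. $\sum_{j,k}f(x_j-x_k)z_j\overline{z_k}\ge0$ for all $z_1,\dots,z_n\in\mathbb{C}$ (equivalently, by Bochner's theorem, $f$ is the Fourier transform of a finite positive measure on $\mathbb{R}$ of total mass $f(0)$). *)

(* Defs.v *)
From Stdlib Require Import Reals.
From Coquelicot Require Import Coquelicot.
Open Scope R_scope.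

Fixpoint qpoch_partial (a : C) (q : R) (N : nat) : C :=
  match N with
  | O => 1%C
  | S N' => (qpoch_partial a q N' * (1 - a * RtoC (q ^ N')))%C
  end.

Definition qpoch (a : C) (q : R) : C :=
  (real (Lim_seq (fun N => Re (qpoch_partial a q N))),
   real (Lim_seq (fun N => Im (qpoch_partial a q N)))).

Definition expi (x : R) : C := (cos x, sin x).

Fixpoint Cprod (n : nat) (f : nat -> C) : C :=
  match n with O => 1%C | S n' => (Cprod n' f * f n')%C end.
Fixpoint Csum (n : nat) (f : nat -> C) : C :=
  match n with O => 0%C | S n' => (Csum n' f + f n')%C end.
Fixpoint Rprod (n : nat) (f : nat -> R) : R :=
  match n with O => 1 | S n' => Rprod n' f * f n' end.

Definition psd_matrix (m : nat) (A : nat -> nat -> C) : Prop :=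
  forall z : nat -> C,
    let s := Csum m (fun j => Csum m (fun k => (A j k * z j * Cconj (z k))%C)) in
    Im s = 0 /\ 0 <= Re s.

Definition positive_definite (f : R -> C) : Prop :=
  (forall x, continuous f x) /\
  (Im (f 0) = 0 /\ 0 < Re (f 0)) /\
  (forall (m : nat) (x : nat -> R), psd_matrix m (fun j k => f (x j - x k))).

(* log q^4 = 4 log q *)
Definition theF (n : nat) (y q : nat -> R) (x : R) : C :=
  Cprod n (fun l =>
    (RtoC (exp (x ^ 2 / (4 * ln (q l)))) / qpoch (RtoC (y l) * expi x) (q l))%C).

(* Main.v *)
Require Import Defs.
From Stdlib Require Import Reals Lra Lia.
From Coquelicot Require Import Coquelicot.
Open Scope R_scope.


Lemma is_lim_seq_opp' u (l : R) : is_lim_seq u l -> is_lim_seq (fun n => - u n) (- l).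
Proof. intros H; apply (proj1 (is_lim_seq_opp _ _) H). Qed.

Lemma is_lim_seq_eq u v (l l' : R) : (forall n, u n = v n) -> l = l' ->
  is_lim_seq u l -> is_lim_seq v l'.
Proof. intros H E L; subst; eapply is_lim_seq_ext; eauto. Qed.

Definition Ccv (u : nat -> C) (l : C) : Prop :=
  is_lim_seq (fun N => Re (u N)) (Re l) /\ is_lim_seq (fun N => Im (u N)) (Im l).

Lemma Ccv_ext u v l : (forall N, u N = v N) -> Ccv u l -> Ccv v l.
Proof.
  intros H [A B]; split; eapply is_lim_seq_ext; try eassumption; intros; simpl; rewrite H; auto.
Qed.

Lemma Ccv_const c : Ccv (fun _ => c) c.
Proof. split; apply is_lim_seq_const. Qed.

Lemma Ccv_plus u v a b : Ccv u a -> Ccv v b -> Ccv (fun N => u N + v N)%C (a + b)%C.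
Proof.
  intros [A1 A2] [B1 B2]; split; simpl.
  - apply (is_lim_seq_plus' _ _ _ _ A1 B1).
  - apply (is_lim_seq_plus' _ _ _ _ A2 B2).
Qed.

Lemma Ccv_mult u v a b : Ccv u a -> Ccv v b -> Ccv (fun N => u N * v N)%C (a * b)%C.
Proof.
  intros [A1 A2] [B1 B2]; split; simpl.
  - apply is_lim_seq_minus'; apply is_lim_seq_mult'; auto.
  - apply is_lim_seq_plus'; apply is_lim_seq_mult'; auto.
Qed.

Lemma Ccv_opp u a : Ccv u a -> Ccv (fun N => - u N)%C (- a)%C.
Proof.
  intros [A1 A2]; split; simpl; apply is_lim_seq_opp' ; auto.
Qed.

Lemma Ccv_Csum m (u : nat -> nat -> C) (a : nat -> C) :
  (forall j, Ccv (fun N => u N j) (a j)) -> Ccv (fun N => Csum m (u N)) (Csum m a).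
Proof.
  intros H; induction m; simpl.
  - apply Ccv_const.
  - apply Ccv_plus; auto.
Qed.

Lemma Ccv_RtoC u (l : R) : is_lim_seq u l -> Ccv (fun N => RtoC (u N)) (RtoC l).
Proof. intros H; split; simpl; auto. apply is_lim_seq_const. Qed.

Lemma Ccv_Cmod u l : Ccv u l -> is_lim_seq (fun N => Cmod (u N)) (Cmod l).
Proof.
  intros [A B]. unfold Cmod.
  apply is_lim_seq_continuous.
  - apply continuity_pt_sqrt. nra.
  - replace (fst l ^ 2 + snd l ^ 2) with (Re l * Re l + Im l * Im l) by (unfold Re, Im; ring).
    eapply is_lim_seq_ext with (u := fun N => Re (u N) * Re (u N) + Im (u N) * Im (u N)).
    + intros; unfold Re, Im; ring.
    + apply is_lim_seq_plus'; apply is_lim_seq_mult'; auto.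
Qed.

Lemma Ccv_inv u (l : C) : l <> 0%C -> Ccv u l -> Ccv (fun N => / u N)%C (/ l)%C.
Proof.
  intros Hl [A B].
  assert (Hd : Re l * Re l + Im l * Im l <> 0).
  { intro E; apply Hl. unfold Re, Im in E. apply injective_projections; simpl; nra. }
  assert (D : is_lim_seq (fun N => Re (u N) * Re (u N) + Im (u N) * Im (u N))
                (Re l * Re l + Im l * Im l)).
  { apply is_lim_seq_plus'; apply is_lim_seq_mult'; auto. }
  assert (DI := is_lim_seq_inv _ _ D). 
  assert (DI' : is_lim_seq (fun N => / (Re (u N) * Re (u N) + Im (u N) * Im (u N)))
                (/ (Re l * Re l + Im l * Im l))).
  { apply DI. intro E; apply Hd. injection E; auto. }
  clear DI.
  unfold Cinv; split; simpl.
  - eapply is_lim_seq_eq.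
    3: { apply (is_lim_seq_mult' _ _ _ _ A DI'). }
    + intros N; simpl. unfold Re, Im, Rdiv. f_equal. f_equal. ring.
    + unfold Re, Im, Rdiv. f_equal. f_equal. ring.
  - eapply is_lim_seq_eq.
    3: { apply (is_lim_seq_mult' _ _ _ _ (is_lim_seq_opp' _ _ B) DI'). }
    + intros N; simpl. unfold Re, Im, Rdiv. f_equal. f_equal. ring.
    + unfold Re, Im, Rdiv. f_equal. f_equal. ring.
Qed.


Lemma Csum_ext n f g : (forall i, f i = g i) -> Csum n f = Csum n g.
Proof. intros H; induction n; simpl; auto. rewrite IHn, H; auto. Qed.

Lemma Csum_plus n f g : Csum n (fun i => f i + g i)%C = (Csum n f + Csum n g)%C.
Proof. induction n; simpl. ring. rewrite IHn; ring. Qed.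

Lemma Csum_mult_l n c f : Csum n (fun i => c * f i)%C = (c * Csum n f)%C.
Proof. induction n; simpl. ring. rewrite IHn; ring. Qed.

Lemma Csum_mult_r n c f : Csum n (fun i => f i * c)%C = (Csum n f * c)%C.
Proof. induction n; simpl. ring. rewrite IHn; ring. Qed.

Lemma Csum_conj n f : Csum n (fun i => Cconj (f i)) = Cconj (Csum n f).
Proof.
  induction n; simpl.
  - apply injective_projections; simpl; lra.
  - rewrite IHn, Cplus_conj; auto.
Qed.

Lemma Csum_zero n : Csum n (fun _ => 0%C) = 0%C.
Proof. induction n; simpl; auto. rewrite IHn; ring. Qed.

Definition qf m (K : nat -> nat -> C) (z : nat -> C) : C :=
  Csum m (fun j => Csum m (fun k => (K j k * z j * Cconj (z k))%C)).

Lemma psd_qf m K : psd_matrix m K <-> forall z, Im (qf m K z) = 0 /\ 0 <= Re (qf m K z).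
Proof. unfold psd_matrix, qf; tauto. Qed.

Lemma qf_ext m K L z : (forall j k, K j k = L j k) -> qf m K z = qf m L z.
Proof.
  intros H; unfold qf; apply Csum_ext; intros j; apply Csum_ext; intros k; rewrite H; auto.
Qed.

Lemma psd_ext m K L : (forall j k, K j k = L j k) -> psd_matrix m K -> psd_matrix m L.
Proof.
  intros H P; apply psd_qf; intros z; rewrite <- (qf_ext m K L z H); apply psd_qf; auto.
Qed.

Lemma psd_lim m (K : nat -> nat -> nat -> C) L :
  (forall j k, Ccv (fun N => K N j k) (L j k)) -> (forall N, psd_matrix m (K N)) ->
  psd_matrix m L.
Proof.
  intros HC HP; apply psd_qf; intros z.
  assert (C : Ccv (fun N => qf m (K N) z) (qf m L z)).
  { unfold qf. apply Ccv_Csum; intros j. apply Ccv_Csum; intros k.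
    apply Ccv_mult; [apply Ccv_mult|]; auto; apply Ccv_const. }
  destruct C as [C1 C2]. split.
  - assert (E : is_lim_seq (fun N => Im (qf m (K N) z)) 0).
    { eapply is_lim_seq_ext; [|apply is_lim_seq_const]. intros N; simpl.
      symmetry; apply (proj1 (proj1 (psd_qf _ _) (HP N) z)). }
    apply is_lim_seq_unique in E. apply is_lim_seq_unique in C2.
    rewrite C2 in E. injection E; auto.
  - assert (L0 := is_lim_seq_le (fun _ => 0) _ 0 _ (fun N => proj2 (proj1 (psd_qf _ _) (HP N) z))
                    (is_lim_seq_const 0) C1).
    simpl in L0; auto.
Qed.

Lemma psd_plus m K L : psd_matrix m K -> psd_matrix m L ->
  psd_matrix m (fun j k => K j k + L j k)%C.
Proof.
  intros PK PL; apply psd_qf; intros z.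
  assert (E : qf m (fun j k => K j k + L j k)%C z = (qf m K z + qf m L z)%C).
  { unfold qf. rewrite <- Csum_plus. apply Csum_ext; intros j.
    rewrite <- Csum_plus. apply Csum_ext; intros k. ring. }
  rewrite E. destruct (proj1 (psd_qf _ _) PK z), (proj1 (psd_qf _ _) PL z).
  destruct (qf m K z) as [a b], (qf m L z) as [a' b']. simpl in *. split; lra.
Qed.

Lemma psd_rank1 m K c v : psd_matrix m K -> 0 <= c ->
  psd_matrix m (fun j k => K j k * (RtoC c * v j * Cconj (v k)))%C.
Proof.
  intros PK Hc; apply psd_qf; intros z.
  assert (E : qf m (fun j k => K j k * (RtoC c * v j * Cconj (v k)))%C z
              = (RtoC c * qf m K (fun j => z j * v j))%C).
  { unfold qf. rewrite <- Csum_mult_l. apply Csum_ext; intros j.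
    rewrite <- Csum_mult_l. apply Csum_ext; intros k. rewrite Cmult_conj. ring. }
  rewrite E. destruct (proj1 (psd_qf _ _) PK (fun j => z j * v j)%C) as [A B].
  destruct (qf m K (fun j => z j * v j)%C) as [a b]. simpl in *. rewrite A. split. ring. nra.
Qed.

Lemma psd_one m : psd_matrix m (fun _ _ => 1%C).
Proof.
  apply psd_qf; intros z.
  assert (E : qf m (fun _ _ => 1%C) z = (Csum m z * Cconj (Csum m z))%C).
  { unfold qf. rewrite <- Csum_mult_r. apply Csum_ext; intros j.
    rewrite <- Csum_conj, <- Csum_mult_l. apply Csum_ext; intros k. ring. }
  rewrite E. destruct (Csum m z) as [a b]. simpl. split. ring. nra.
Qed.

Lemma psd_partial m K (c : nat -> R) (v : nat -> nat -> C) :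
  psd_matrix m K -> (forall n, 0 <= c n) -> forall N,
  psd_matrix m (fun j k => K j k * Csum N (fun n => RtoC (c n) * v n j * Cconj (v n k)))%C.
Proof.
  intros PK Hc N; induction N.
  - apply psd_qf; intros z. simpl.
    assert (E : qf m (fun j k => K j k * 0)%C z = 0%C).
    { unfold qf. transitivity (Csum m (fun _ => 0%C)); [|apply Csum_zero].
      apply Csum_ext; intros j.
      transitivity (Csum m (fun _ => 0%C)); [|apply Csum_zero].
      apply Csum_ext; intros k. ring. }
    rewrite E. simpl. lra.
  - simpl. eapply psd_ext.
    2: { apply psd_plus. apply IHN. apply (psd_rank1 m K (c N) (v N) PK (Hc N)). }
    intros j k. cbv beta. ring.
Qed.

Lemma psd_mul_series m K (c : nat -> R) (v : nat -> nat -> C) L :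
  psd_matrix m K -> (forall n, 0 <= c n) ->
  (forall j k, Ccv (fun N => Csum N (fun n => RtoC (c n) * v n j * Cconj (v n k))%C) (L j k)) ->
  psd_matrix m (fun j k => K j k * L j k)%C.
Proof.
  intros PK Hc HL.
  apply (psd_lim m (fun N j k => K j k * Csum N (fun n => RtoC (c n) * v n j * Cconj (v n k)))%C).
  - intros j k. apply Ccv_mult; [apply Ccv_const|auto].
  - apply psd_partial; auto.
Qed.


Lemma exp_le_mono x y : x <= y -> exp x <= exp y.
Proof. intros H; destruct (Rle_lt_or_eq_dec _ _ H). left; apply exp_increasing; auto. subst; lra. Qed.

Fixpoint Rsum (n : nat) (f : nat -> R) : R :=
  match n with O => 0 | S n' => Rsum n' f + f n' end.

Lemma geom_sum q N : Rsum N (fun k => q ^ k) * (1 - q) = 1 - q ^ N.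
Proof. induction N; simpl. ring. rewrite Rmult_plus_distr_r, IHN. ring. Qed.

Lemma geom_le q N : 0 < q < 1 -> Rsum N (fun k => q ^ k) <= / (1 - q).
Proof.
  intros Hq. assert (G := geom_sum q N). assert (0 <= q ^ N) by (apply pow_le; lra).
  apply (Rmult_le_reg_r (1 - q)). lra. rewrite G, Rinv_l; lra.
Qed.

Definition Mb q := exp (/ (1 - q)).

Lemma Cmod_1_minus a t : Cmod (1 - a * RtoC t) <= 1 + Cmod a * Rabs t.
Proof.
  unfold Cminus. eapply Rle_trans. apply Cmod_triangle.
  rewrite Cmod_1, Cmod_opp, Cmod_mult, Cmod_R. lra.
Qed.

Lemma Cmod_1_minus_ge a t : 1 - Cmod a * Rabs t <= Cmod (1 - a * RtoC t).
Proof.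
  assert (H := Cmod_triangle (1 - a * RtoC t) (a * RtoC t)).
  replace (1 - a * RtoC t + a * RtoC t)%C with (RtoC 1) in H by ring.
  rewrite Cmod_1, Cmod_mult, Cmod_R in H. lra.
Qed.

Lemma P_bound a q N : 0 < q < 1 -> Cmod a <= 1 -> Cmod (qpoch_partial a q N) <= Mb q.
Proof.
  intros Hq Ha.
  assert (H : Cmod (qpoch_partial a q N) <= exp (Rsum N (fun k => q ^ k))).
  { induction N; simpl.
    - rewrite Cmod_1, exp_0; lra.
    - rewrite Cmod_mult, exp_plus.
      assert (0 <= q ^ N) by (apply pow_le; lra).
      apply Rmult_le_compat; try apply Cmod_ge_0; auto.
      eapply Rle_trans. apply Cmod_1_minus.
      eapply Rle_trans. 2: apply exp_ineq1_le.
      rewrite Rabs_right by lra. nra. }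
  eapply Rle_trans. apply H. apply exp_le_mono, geom_le; auto.
Qed.

Lemma P_step a q N : 0 < q < 1 -> Cmod a <= 1 ->
  Cmod (qpoch_partial a q (S N) - qpoch_partial a q N) <= Mb q * q ^ N.
Proof.
  intros Hq Ha. simpl.
  replace (qpoch_partial a q N * (1 - a * RtoC (q ^ N)) - qpoch_partial a q N)%C
    with (- (qpoch_partial a q N * (a * RtoC (q ^ N))))%C by ring.
  rewrite Cmod_opp, !Cmod_mult, Cmod_R.
  assert (0 <= q ^ N) by (apply pow_le; lra).
  rewrite Rabs_right by lra.
  assert (B := P_bound a q N Hq Ha). assert (0 <= Cmod a) by apply Cmod_ge_0.
  assert (0 <= Cmod (qpoch_partial a q N)) by apply Cmod_ge_0.
  assert (Cmod a * q ^ N <= q ^ N) by nra.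
  rewrite <- Rmult_assoc. nra.
Qed.

Lemma P_tail a q N d : 0 < q < 1 -> Cmod a <= 1 ->
  Cmod (qpoch_partial a q (N + d) - qpoch_partial a q N) <= Mb q * (q ^ N - q ^ (N + d)) / (1 - q).
Proof.
  intros Hq Ha. induction d.
  - rewrite Nat.add_0_r. replace (qpoch_partial a q N - qpoch_partial a q N)%C with (RtoC 0) by ring.
    rewrite Cmod_0. unfold Rdiv. rewrite Rminus_diag, Rmult_0_r, Rmult_0_l. lra.
  - replace (qpoch_partial a q (N + S d) - qpoch_partial a q N)%C with
      ((qpoch_partial a q (S (N + d)) - qpoch_partial a q (N + d)) +
       (qpoch_partial a q (N + d) - qpoch_partial a q N))%C
      by (rewrite Nat.add_succ_r; ring).
    eapply Rle_trans. apply Cmod_triangle.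
    eapply Rle_trans. apply Rplus_le_compat. apply P_step; auto. apply IHd.
    rewrite Nat.add_succ_r. simpl pow.
    apply Req_le. field. lra.
Qed.

Lemma P_tail' a q N d : 0 < q < 1 -> Cmod a <= 1 ->
  Cmod (qpoch_partial a q (N + d) - qpoch_partial a q N) <= Mb q * q ^ N / (1 - q).
Proof.
  intros Hq Ha. eapply Rle_trans. apply P_tail; auto.
  assert (0 <= q ^ (N + d)) by (apply pow_le; lra).
  assert (0 < Mb q) by apply exp_pos.
  unfold Rdiv. apply Rmult_le_compat_r. left; apply Rinv_0_lt_compat; lra. nra.
Qed.


Lemma cauchy_lim (u b : nat -> R) :
  (forall N d, Rabs (u (N + d)%nat - u N) <= b N) -> is_lim_seq b 0 ->
  exists l : R, is_lim_seq u l /\ (forall N, Rabs (u N - l) <= b N) /\ real (Lim_seq u) = l.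
Proof.
  intros Hu Hb.
  assert (EX : ex_finite_lim_seq u).
  { apply ex_lim_seq_cauchy_corr. intros eps.
    apply is_lim_seq_Reals in Hb. destruct (Hb eps (cond_pos eps)) as [N HN].
    exists N. intros n m Hn Hm.
    assert (Hbn : b n < eps).
    { specialize (HN n Hn). unfold Rdist in HN. rewrite Rminus_0_r in HN.
      eapply Rle_lt_trans. apply Rle_abs. auto. }
    assert (Hbm : b m < eps).
    { specialize (HN m Hm). unfold Rdist in HN. rewrite Rminus_0_r in HN.
      eapply Rle_lt_trans. apply Rle_abs. auto. }
    destruct (Nat.le_ge_cases n m) as [H|H].
    - destruct (Nat.le_exists_sub n m H) as [d [Hd _]]. subst m.
      rewrite Nat.add_comm. rewrite Rabs_minus_sym. eapply Rle_lt_trans. apply Hu. auto.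
    - destruct (Nat.le_exists_sub m n H) as [d [Hd _]]. subst n.
      rewrite Nat.add_comm. eapply Rle_lt_trans. apply Hu. auto. }
  destruct EX as [l Hl]. exists l. split; auto. split.
  - intros N.
    assert (L1 : is_lim_seq (fun d => u (d + N)%nat) l) by (apply is_lim_seq_incr_n; auto).
    assert (L2 : is_lim_seq (fun d => Rabs (u (d + N)%nat - u N)) (Rabs (l - u N))).
    { apply (is_lim_seq_continuous (fun t => Rabs (t - u N))).
      - apply continuity_pt_filterlim. apply continuous_comp with (f := fun t => t - u N).
        + apply (continuous_plus (fun t => t) (fun _ => - u N)). apply continuous_id. apply continuous_const.
        + apply continuous_Rabs.
      - auto. }
    assert (L3 := is_lim_seq_le _ _ _ _ (fun d => eq_ind _ (fun k => Rabs (u k - u N) <= b N) (Hu N d) _ (Nat.add_comm N d)) L2 (is_lim_seq_const (b N))).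
    simpl in L3. rewrite Rabs_minus_sym. auto.
  - rewrite (is_lim_seq_unique _ _ Hl). reflexivity.
Qed.

Lemma im_le_Cmod c : Rabs (Im c) <= Cmod c.
Proof. eapply Rle_trans. 2: apply Rmax_Cmod. apply Rmax_r. Qed.

Definition Bq q N := Mb q * q ^ N / (1 - q).

Lemma Bq_lim q : 0 < q < 1 -> is_lim_seq (Bq q) 0.
Proof.
  intros Hq. unfold Bq.
  apply (is_lim_seq_eq (fun N => Mb q * q ^ N * / (1 - q)) _ (Mb q * 0 * / (1 - q))).
  - intros; reflexivity.
  - ring.
  - apply is_lim_seq_mult'. apply is_lim_seq_mult'. apply is_lim_seq_const.
    apply is_lim_seq_geom. rewrite Rabs_right; lra. apply is_lim_seq_const.
Qed.

Lemma qpoch_cv a q : 0 < q < 1 -> Cmod a <= 1 ->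
  Ccv (qpoch_partial a q) (qpoch a q) /\
  (forall N, Rabs (Re (qpoch_partial a q N) - Re (qpoch a q)) <= Bq q N /\
             Rabs (Im (qpoch_partial a q N) - Im (qpoch a q)) <= Bq q N).
Proof.
  intros Hq Ha.
  destruct (cauchy_lim (fun N => Re (qpoch_partial a q N)) (Bq q)) as [l1 [A1 [B1 C1]]].
  { intros N d. eapply Rle_trans. 2: apply (P_tail' a q N d Hq Ha).
    eapply Rle_trans. 2: apply re_le_Cmod. right. f_equal; try (unfold Cminus; simpl; ring). }
  { apply Bq_lim; auto. }
  destruct (cauchy_lim (fun N => Im (qpoch_partial a q N)) (Bq q)) as [l2 [A2 [B2 C2]]].
  { intros N d. eapply Rle_trans. 2: apply (P_tail' a q N d Hq Ha).
    eapply Rle_trans. 2: apply im_le_Cmod. right. f_equal; try (unfold Cminus; simpl; ring). }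
  { apply Bq_lim; auto. }
  assert (E : qpoch a q = (l1, l2)).
  { unfold qpoch. simpl in C1, C2. rewrite C1, C2. reflexivity. }
  rewrite E. split. split; simpl; auto. intros N; split; simpl; auto.
Qed.


Lemma pow_le1 q N : 0 <= q <= 1 -> q ^ N <= 1.
Proof.
  intros H; induction N; simpl. lra.
  assert (0 <= q ^ N) by (apply pow_le; lra). nra.
Qed.

Lemma qpoch_partial_real y q N :
  qpoch_partial (RtoC y) q N = RtoC (Rprod N (fun k => 1 - y * q ^ k)).
Proof.
  induction N; simpl. reflexivity. rewrite IHN.
  apply injective_projections; simpl; ring.
Qed.

Lemma one_minus_ge_exp t y : 0 <= t <= y -> y < 1 -> exp (- (t / (1 - y))) <= 1 - t.
Proof.
  intros Ht Hy. rewrite exp_Ropp.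
  assert (E := exp_ineq1_le (t / (1 - y))).
  assert (P := exp_pos (t / (1 - y))).
  assert (K : 1 <= (1 - t) * (1 + t / (1 - y))).
  { replace ((1 - t) * (1 + t / (1 - y))) with (1 + t * (y - t) / (1 - y)) by (field; lra).
    assert (0 <= t * (y - t) / (1 - y)).
    { unfold Rdiv. apply Rmult_le_pos. nra. left; apply Rinv_0_lt_compat; lra. }
    lra. }
  apply (Rmult_le_reg_r (exp (t / (1 - y)))); auto.
  rewrite Rinv_l by lra. nra.
Qed.

Definition Lq y q := exp (- (y / (1 - y) * / (1 - q))).

Lemma Rprod_lb y q N : 0 < y < 1 -> 0 < q < 1 ->
  Lq y q <= Rprod N (fun k => 1 - y * q ^ k).
Proof.
  intros Hy Hq.
  assert (H : exp (- (y / (1 - y) * Rsum N (fun k => q ^ k))) <= Rprod N (fun k => 1 - y * q ^ k)).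
  { induction N; simpl.
    - rewrite Rmult_0_r, Ropp_0, exp_0. lra.
    - replace (- (y / (1 - y) * (Rsum N (fun k => q ^ k) + q ^ N))) with
        (- (y / (1 - y) * Rsum N (fun k => q ^ k)) + - (y * q ^ N / (1 - y))) by (field; lra).
      rewrite exp_plus.
      assert (0 <= q ^ N) by (apply pow_le; lra). assert (q ^ N <= 1) by (apply pow_le1; lra).
      apply Rmult_le_compat; try (left; apply exp_pos); auto.
      apply one_minus_ge_exp; try lra. split; nra. }
  eapply Rle_trans. 2: apply H. unfold Lq. apply exp_le_mono.
  assert (G := geom_le q N Hq).
  assert (0 <= y / (1 - y)). { unfold Rdiv. apply Rmult_le_pos. lra. left; apply Rinv_0_lt_compat; lra. }
  nra.
Qed.

Lemma Cmod_P_ge a y q N : 0 < y < 1 -> 0 < q < 1 -> Cmod a <= y ->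
  Rprod N (fun k => 1 - y * q ^ k) <= Cmod (qpoch_partial a q N).
Proof.
  intros Hy Hq Ha. induction N; simpl.
  - rewrite Cmod_1; lra.
  - rewrite Cmod_mult.
    assert (0 <= q ^ N) by (apply pow_le; lra). assert (q ^ N <= 1) by (apply pow_le1; lra).
    assert (0 <= Rprod N (fun k => 1 - y * q ^ k)).
    { clear IHN. induction N; simpl. lra. apply Rmult_le_pos. apply IHN.
      apply pow_le; lra. apply pow_le1; lra. assert (q ^ N <= 1) by (apply pow_le1; lra).
      assert (0 <= q ^ N) by (apply pow_le; lra). nra. }
    apply Rmult_le_compat; auto. nra.
    eapply Rle_trans. 2: apply Cmod_1_minus_ge. rewrite Rabs_right by lra.
    assert (0 <= Cmod a) by apply Cmod_ge_0. nra.
Qed.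

Lemma qpoch_real y q : 0 < y < 1 -> 0 < q < 1 ->
  qpoch (RtoC y) q = RtoC (Re (qpoch (RtoC y) q)) /\ Lq y q <= Re (qpoch (RtoC y) q).
Proof.
  intros Hy Hq.
  assert (Ha : Cmod (RtoC y) <= 1) by (rewrite Cmod_R, Rabs_right; lra).
  destruct (qpoch_cv _ _ Hq Ha) as [[A B] _].
  split.
  - apply injective_projections; simpl; auto.
    assert (E : is_lim_seq (fun N => Im (qpoch_partial (RtoC y) q N)) 0).
    { eapply is_lim_seq_ext; [|apply is_lim_seq_const]. intros N.
      rewrite qpoch_partial_real. reflexivity. }
    apply is_lim_seq_unique in E. apply is_lim_seq_unique in B. rewrite B in E.
    injection E; auto.
  - assert (H : forall N, Lq y q <= Re (qpoch_partial (RtoC y) q N)).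
    { intros N; rewrite qpoch_partial_real; simpl; apply Rprod_lb; auto. }
    assert (L := is_lim_seq_le (fun _ => Lq y q) _ _ _ H (is_lim_seq_const _) A).
    simpl in L. auto.
Qed.

Lemma qpoch_mod_ge a y q : 0 < y < 1 -> 0 < q < 1 -> Cmod a <= y ->
  Re (qpoch (RtoC y) q) <= Cmod (qpoch a q).
Proof.
  intros Hy Hq Ha.
  assert (Ha1 : Cmod (RtoC y) <= 1) by (rewrite Cmod_R, Rabs_right; lra).
  assert (Ha2 : Cmod a <= 1) by lra.
  destruct (qpoch_cv _ _ Hq Ha1) as [[A _] _].
  destruct (qpoch_cv _ _ Hq Ha2) as [C _].
  assert (M := Ccv_Cmod _ _ C).
  assert (H : forall N, Re (qpoch_partial (RtoC y) q N) <= Cmod (qpoch_partial a q N)).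
  { intros N; rewrite qpoch_partial_real; simpl; apply Cmod_P_ge; auto. }
  assert (L := is_lim_seq_le _ _ _ _ H A M).
  simpl in L. auto.
Qed.

Lemma qpoch_pos a y q : 0 < y < 1 -> 0 < q < 1 -> Cmod a <= y -> 0 < Cmod (qpoch a q).
Proof.
  intros Hy Hq Ha. eapply Rlt_le_trans. 2: apply (qpoch_mod_ge a y q); auto.
  eapply Rlt_le_trans. apply exp_pos. apply (proj2 (qpoch_real y q Hy Hq)).
Qed.


Lemma Ccv_eql u l l' : Ccv u l -> l = l' -> Ccv u l'.
Proof. intros H E; subst; auto. Qed.

Lemma expi_mult a b : (expi a * expi b)%C = expi (a + b).
Proof. unfold expi. apply injective_projections; simpl; rewrite ?cos_plus, ?sin_plus; ring. Qed.

Lemma expi_conj a : Cconj (expi a) = expi (- a).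
Proof. unfold expi, Cconj. rewrite cos_neg, sin_neg. reflexivity. Qed.

Lemma Cmod_expi a : Cmod (expi a) = 1.
Proof.
  unfold Cmod, expi. rewrite <- sqrt_1. f_equal. simpl.
  transitivity ((sin a)² + (cos a)²). unfold Rsqr; ring. apply sin2_cos2.
Qed.

Lemma Cconj_RtoC r : Cconj (RtoC r) = RtoC r.
Proof. apply injective_projections; simpl; ring. Qed.

Lemma geom_Ccv b s r : 0 <= b < 1 ->
  Ccv (fun N => Csum N (fun n => RtoC (b ^ n) * expi (INR n * s) * Cconj (expi (INR n * r))))%C
      (/ (1 - expi (s - r) * RtoC b))%C.
Proof.
  intros Hb.
  set (w := (expi (s - r) * RtoC b)%C).
  set (T := fun n => (RtoC (b ^ n) * expi (INR n * (s - r)))%C).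
  assert (Hw : (1 - w)%C <> 0%C).
  { intro E. assert (G := Cmod_1_minus_ge (expi (s - r)) b). fold w in G.
    rewrite E, Cmod_0, Cmod_expi, Rabs_right in G; lra. }
  assert (HT : forall n, (RtoC (b ^ n) * expi (INR n * s) * Cconj (expi (INR n * r)))%C = T n).
  { intros n. unfold T. rewrite expi_conj, <- Cmult_assoc, expi_mult. do 2 f_equal. ring. }
  assert (HS : forall N, (Csum N T * (1 - w))%C = (1 - T N)%C).
  { induction N; simpl.
    - unfold T. simpl. rewrite Rmult_0_l. unfold expi. rewrite cos_0, sin_0.
      apply injective_projections; simpl; ring.
    - rewrite Cmult_plus_distr_r, IHN.
      assert (E : T (S N) = (T N * w)%C).
      { unfold T, w. rewrite S_INR. simpl pow.
        replace ((INR N + 1) * (s - r)) with (INR N * (s - r) + (s - r)) by ring.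
        rewrite <- expi_mult, RtoC_mult. ring. }
      rewrite E. ring. }
  assert (T0 : Ccv T 0%C).
  { assert (Hg : is_lim_seq (fun n => b ^ n) 0) by (apply is_lim_seq_geom; rewrite Rabs_right; lra).
    assert (Hg' : is_lim_seq (fun n => - b ^ n) 0).
    { replace (Finite 0) with (Rbar_opp (Finite 0)) by (simpl; f_equal; ring).
      apply (proj1 (is_lim_seq_opp _ _) Hg). }
    split; simpl; apply (is_lim_seq_le_le (fun n => - b ^ n) _ (fun n => b ^ n)); auto;
      intros n; unfold T, expi; simpl; assert (0 <= b ^ n) by (apply pow_le; lra).
    - generalize (COS_bound (INR n * (s - r))); nra.
    - generalize (SIN_bound (INR n * (s - r))); nra. }
  eapply Ccv_ext. intros N. symmetry.
  transitivity (Csum N T). apply Csum_ext; auto.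
  transitivity ((1 - T N) * / (1 - w))%C. rewrite <- HS. field. auto. reflexivity.
  eapply Ccv_eql. apply Ccv_mult. apply Ccv_plus. apply Ccv_const. apply Ccv_opp. apply T0.
  apply Ccv_const. field. auto.
Qed.

Lemma psd_qfactor m K b (x : nat -> R) : psd_matrix m K -> 0 <= b < 1 ->
  psd_matrix m (fun j k => K j k * / (1 - expi (x j - x k) * RtoC b))%C.
Proof.
  intros PK Hb.
  apply (psd_mul_series m K (fun n => b ^ n) (fun n j => expi (INR n * x j))); auto.
  - intros n; apply pow_le; lra.
  - intros j k. apply geom_Ccv; auto.
Qed.

Lemma Rsum_sum_f a N : Rsum (S N) a = sum_f_R0 a N.
Proof. induction N; simpl. ring. rewrite <- IHN. simpl. ring. Qed.

Lemma Csum_RtoC N f : Csum N (fun n => RtoC (f n)) = RtoC (Rsum N f).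
Proof. induction N; simpl. reflexivity. rewrite IHN. apply injective_projections; simpl; ring. Qed.

Lemma Rsum_scal N c f : Rsum N (fun n => c * f n) = c * Rsum N f.
Proof. induction N; simpl. ring. rewrite IHN; ring. Qed.

Lemma exp_series t : is_lim_seq (fun N => Rsum N (fun n => / INR (Factorial.fact n) * t ^ n)) (exp t).
Proof.
  assert (H := is_exp_Reals t). apply is_pseries_R in H. apply is_series_Reals in H.
  unfold infinite_sum in H. apply is_lim_seq_incr_1.
  eapply is_lim_seq_ext. intros N; symmetry; apply Rsum_sum_f.
  apply is_lim_seq_Reals. intros eps Heps. destruct (H eps Heps) as [N HN]. exists N. auto.
Qed.

Lemma psd_gauss m K al (x : nat -> R) : psd_matrix m K -> 0 < al ->
  psd_matrix m (fun j k => K j k * RtoC (exp (- (al * (x j - x k) ^ 2))))%C.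
Proof.
  intros PK Hal.
  apply (psd_mul_series m K (fun n => / INR (Factorial.fact n) * (2 * al) ^ n)
           (fun n j => RtoC (exp (- (al * x j ^ 2)) * x j ^ n))); auto.
  - intros n. apply Rmult_le_pos. left; apply Rinv_0_lt_compat, lt_0_INR, Factorial.lt_O_fact.
    apply pow_le; lra.
  - intros j k.
    set (E := exp (- (al * x j ^ 2)) * exp (- (al * x k ^ 2))).
    set (t := 2 * al * x j * x k).
    eapply Ccv_ext. intros N. symmetry.
    transitivity (Csum N (fun n => RtoC (E * (/ INR (Factorial.fact n) * t ^ n)))).
    { apply Csum_ext; intros n. rewrite Cconj_RtoC, <- !RtoC_mult. f_equal.
      unfold E, t. rewrite !Rpow_mult_distr. ring. }
    rewrite Csum_RtoC, Rsum_scal. reflexivity.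
    apply Ccv_RtoC.
    replace (exp (- (al * (x j - x k) ^ 2))) with (E * exp t).
    apply (is_lim_seq_mult' (fun _ => E) _ E (exp t)). apply is_lim_seq_const. apply exp_series.
    unfold E, t. rewrite <- !exp_plus. f_equal. ring.
Qed.


Lemma Cmod_yexpi y t : 0 <= y -> Cmod (RtoC y * expi t) = y.
Proof. intros Hy. rewrite Cmod_mult, Cmod_R, Cmod_expi, Rabs_right; lra. Qed.

Lemma Cneq0 (z : C) : 0 < Cmod z -> z <> 0%C.
Proof. intros H E. rewrite E, Cmod_0 in H. lra. Qed.

Lemma psd_qpoch m K y q (x : nat -> R) : psd_matrix m K -> 0 < y < 1 -> 0 < q < 1 ->
  psd_matrix m (fun j k => K j k * / qpoch (RtoC y * expi (x j - x k)) q)%C.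
Proof.
  intros PK Hy Hq.
  assert (A : forall N, psd_matrix m (fun j k => K j k *
             Cprod N (fun i => / (1 - expi (x j - x k) * RtoC (y * q ^ i))))%C).
  { induction N; simpl.
    - eapply psd_ext; [|apply PK]. intros; simpl; ring.
    - eapply psd_ext. 2: { apply (psd_qfactor m _ (y * q ^ N) x IHN).
        assert (0 <= q ^ N) by (apply pow_le; lra). assert (q ^ N <= 1) by (apply pow_le1; lra).
        split; nra. }
      intros j k; cbv beta. ring. }
  assert (Ha : forall t, Cmod (RtoC y * expi t) <= y) by (intros; rewrite Cmod_yexpi; lra).
  assert (B : forall t N, Cprod N (fun i => / (1 - expi t * RtoC (y * q ^ i)))%C
                        = (/ qpoch_partial (RtoC y * expi t) q N)%C).
  { intros t N. induction N; simpl.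
    - apply injective_projections; simpl; field.
    - rewrite IHN.
      assert (P1 : qpoch_partial (RtoC y * expi t) q N <> 0%C).
      { apply Cneq0. eapply Rlt_le_trans. 2: apply (Cmod_P_ge _ y); auto.
        eapply Rlt_le_trans. apply exp_pos. apply Rprod_lb; auto. }
      assert (F1 : (1 - expi t * RtoC (y * q ^ N))%C <> 0%C).
      { apply Cneq0. eapply Rlt_le_trans. 2: apply Cmod_1_minus_ge.
        rewrite Cmod_expi. assert (0 <= q ^ N) by (apply pow_le; lra).
        assert (q ^ N <= 1) by (apply pow_le1; lra). rewrite Rabs_right; nra. }
      replace (1 - RtoC y * expi t * RtoC (q ^ N))%C with (1 - expi t * RtoC (y * q ^ N))%C
        by (rewrite RtoC_mult; ring).
      field. split; auto. }
  apply (psd_lim m (fun N j k => K j k *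
             Cprod N (fun i => / (1 - expi (x j - x k) * RtoC (y * q ^ i))))%C); auto.
  intros j k. apply (Ccv_ext (fun N => K j k * / qpoch_partial (RtoC y * expi (x j - x k)) q N)%C).
  intros N. rewrite B. reflexivity.
  apply Ccv_mult. apply Ccv_const.
  assert (Ha1 : Cmod (RtoC y * expi (x j - x k)) <= 1) by (specialize (Ha (x j - x k)); lra).
  apply Ccv_inv. apply Cneq0. apply (qpoch_pos _ y); auto.
  apply (proj1 (qpoch_cv _ _ Hq Ha1)).
Qed.

Lemma ln_neg q : 0 < q < 1 -> ln q < 0.
Proof. intros H. rewrite <- ln_1. apply ln_increasing; lra. Qed.

Lemma main_psd n (y q : nat -> R)
  (hy : forall l, (l < n)%nat -> 0 < y l < 1)
  (hq : forall l, (l < n)%nat -> 0 < q l < 1) (m : nat) (x : nat -> R) :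
  psd_matrix m (fun j k =>
       Cprod n (fun l =>
         (RtoC (exp ((x j - x k) ^ 2 / (4 * ln (q l))))
          / qpoch (RtoC (y l) * expi (x j - x k)) (q l))%C)).
Proof.
  induction n; cbn [Cprod].
  - apply psd_one.
  - assert (IH : psd_matrix m (fun j k => Cprod n (fun l =>
         (RtoC (exp ((x j - x k) ^ 2 / (4 * ln (q l))))
          / qpoch (RtoC (y l) * expi (x j - x k)) (q l))%C))).
    { apply IHn; intros; [apply hy|apply hq]; lia. }
    assert (Hy := hy n (Nat.lt_succ_diag_r n)). assert (Hq := hq n (Nat.lt_succ_diag_r n)).
    assert (Hl := ln_neg _ Hq).
    set (al := - / (4 * ln (q n))).
    assert (Hal : 0 < al).
    { unfold al. apply Ropp_0_gt_lt_contravar. apply Rinv_lt_0_compat. lra. }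
    assert (G := psd_gauss m _ al x IH Hal).
    assert (Q := psd_qpoch m _ (y n) (q n) x G Hy Hq).
    eapply psd_ext; [|apply Q]. intros j k. cbv beta. unfold Cdiv.
    replace ((x j - x k) ^ 2 / (4 * ln (q n))) with (- (al * (x j - x k) ^ 2)).
    ring. unfold al. field. lra.
Qed.


Lemma cp_mult f g x : continuity_pt f x -> continuity_pt g x -> continuity_pt (fun t => f t * g t) x.
Proof. intros; exact (continuity_pt_mult f g x H H0). Qed.
Lemma cp_plus f g x : continuity_pt f x -> continuity_pt g x -> continuity_pt (fun t => f t + g t) x.
Proof. intros; exact (continuity_pt_plus f g x H H0). Qed.
Lemma cp_minus f g x : continuity_pt f x -> continuity_pt g x -> continuity_pt (fun t => f t - g t) x.
Proof. intros; exact (continuity_pt_minus f g x H H0). Qed.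
Lemma cp_opp f x : continuity_pt f x -> continuity_pt (fun t => - f t) x.
Proof. intros; exact (continuity_pt_opp f x H). Qed.
Lemma cp_div f g x : continuity_pt f x -> continuity_pt g x -> g x <> 0 -> continuity_pt (fun t => f t / g t) x.
Proof. intros; exact (continuity_pt_div f g x H H0 H1). Qed.
Lemma cp_const c x : continuity_pt (fun _ => c) x.
Proof. apply continuity_pt_const. intros a b; reflexivity. Qed.
Lemma cp_id x : continuity_pt (fun t => t) x.
Proof. apply continuity_pt_filterlim. apply continuous_id. Qed.
Lemma cp_comp f g x : continuity_pt f x -> continuity_pt g (f x) -> continuity_pt (fun t => g (f t)) x.
Proof. intros; exact (continuity_pt_comp f g x H H0). Qed.
Lemma cp_exp f x : continuity_pt f x -> continuity_pt (fun t => exp (f t)) x.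
Proof. intros H; apply cp_comp; auto. apply continuity_pt_filterlim. apply continuous_exp. Qed.
Lemma cp_cos f x : continuity_pt f x -> continuity_pt (fun t => cos (f t)) x.
Proof. intros H; apply cp_comp; auto. apply continuity_cos. Qed.
Lemma cp_sin f x : continuity_pt f x -> continuity_pt (fun t => sin (f t)) x.
Proof. intros H; apply cp_comp; auto. apply continuity_sin. Qed.

Definition Ccont (f : R -> C) x :=
  continuity_pt (fun t => Re (f t)) x /\ continuity_pt (fun t => Im (f t)) x.

Lemma Ccont_continuous f x : Ccont f x -> continuous f x.
Proof.
  intros [H1 H2].
  apply continuity_pt_filterlim in H1. apply continuity_pt_filterlim in H2.
  apply filterlim_locally. intros eps.
  apply filterlim_locally with (eps:=eps) in H1.
  apply filterlim_locally with (eps:=eps) in H2.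
  generalize (filter_and _ _ H1 H2). apply filter_imp. intros t [A B].
  split; assumption.
Qed.

Lemma Ccont_const c x : Ccont (fun _ => c) x.
Proof. split; apply cp_const. Qed.

Lemma Ccont_mult f g x : Ccont f x -> Ccont g x -> Ccont (fun t => f t * g t)%C x.
Proof.
  intros [A B] [C D]; split; simpl.
  - apply cp_minus; apply cp_mult; auto.
  - apply cp_plus; apply cp_mult; auto.
Qed.

Lemma Ccont_minus f g x : Ccont f x -> Ccont g x -> Ccont (fun t => f t - g t)%C x.
Proof. intros [A B] [C D]; split; simpl; apply cp_plus; auto; apply cp_opp; auto. Qed.

Lemma Ccont_RtoC f x : continuity_pt f x -> Ccont (fun t => RtoC (f t)) x.
Proof. intros H; split; simpl; auto. apply cp_const. Qed.

Lemma Ccont_expi f x : continuity_pt f x -> Ccont (fun t => expi (f t)) x.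
Proof. intros H; split; simpl. apply cp_cos; auto. apply cp_sin; auto. Qed.

Lemma Ccont_inv f x : Ccont f x -> f x <> 0%C -> Ccont (fun t => / f t)%C x.
Proof.
  intros [A B] Hf.
  assert (D : fst (f x) ^ 2 + snd (f x) ^ 2 <> 0).
  { intro E; apply Hf. apply injective_projections; simpl; nra. }
  assert (CD : continuity_pt (fun t => fst (f t) ^ 2 + snd (f t) ^ 2) x).
  { apply cp_plus; simpl; repeat apply cp_mult; auto; apply cp_const. }
  split; simpl; apply cp_div; auto. apply cp_opp; auto.
Qed.

Lemma unif_cont (f : nat -> R -> R) g b x :
  (forall N, continuity_pt (f N) x) -> (forall N t, Rabs (f N t - g t) <= b N) ->
  is_lim_seq b 0 -> continuity_pt g x.
Proof.
  intros Hf Hb Hl.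
  unfold continuity_pt, continue_in, limit1_in, limit_in. intros eps Heps.
  apply is_lim_seq_Reals in Hl.
  destruct (Hl (eps / 3)) as [N HN]. lra.
  specialize (HN N (le_n N)). unfold Rdist in HN. rewrite Rminus_0_r in HN.
  assert (HbN : b N < eps / 3) by (eapply Rle_lt_trans; [apply Rle_abs|auto]).
  destruct (Hf N (eps / 3)) as [alp [Ha H]]. lra.
  exists alp; split; auto. intros t Ht. specialize (H t Ht).
  simpl in *. unfold Rdist in *.
  assert (E1 := Hb N t). assert (E2 := Hb N x).
  replace (g t - g x) with ((g t - f N t) + (f N t - f N x) + (f N x - g x)) by ring.
  eapply Rle_lt_trans. apply Rabs_triang.
  eapply Rle_lt_trans. apply Rplus_le_compat_r. apply Rabs_triang.
  rewrite (Rabs_minus_sym (g t)). lra.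
Qed.

Lemma Ccont_P y q N x : Ccont (fun t => qpoch_partial (RtoC y * expi t) q N) x.
Proof.
  induction N; simpl.
  - apply Ccont_const.
  - apply Ccont_mult; auto. apply Ccont_minus. apply Ccont_const.
    apply Ccont_mult. apply Ccont_mult. apply Ccont_const. apply Ccont_expi, cp_id.
    apply Ccont_const.
Qed.

Lemma Ccont_qpoch y q x : 0 < y < 1 -> 0 < q < 1 -> Ccont (fun t => qpoch (RtoC y * expi t) q) x.
Proof.
  intros Hy Hq.
  assert (Ha : forall t, Cmod (RtoC y * expi t) <= 1) by (intros; rewrite Cmod_yexpi; lra).
  split.
  - apply (unif_cont (fun N t => Re (qpoch_partial (RtoC y * expi t) q N)) _ (Bq q)).
    + intros N. apply (Ccont_P y q N x).
    + intros N t. apply (proj2 (qpoch_cv _ _ Hq (Ha t)) N).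
    + apply Bq_lim; auto.
  - apply (unif_cont (fun N t => Im (qpoch_partial (RtoC y * expi t) q N)) _ (Bq q)).
    + intros N. apply (Ccont_P y q N x).
    + intros N t. apply (proj2 (qpoch_cv _ _ Hq (Ha t)) N).
    + apply Bq_lim; auto.
Qed.

Lemma theF_cont n y q
  (hy : forall l, (l < n)%nat -> 0 < y l < 1)
  (hq : forall l, (l < n)%nat -> 0 < q l < 1) x : Ccont (theF n y q) x.
Proof.
  unfold theF. induction n; cbn [Cprod].
  - apply Ccont_const.
  - apply Ccont_mult. apply IHn; intros; [apply hy|apply hq]; lia.
    assert (Hy := hy n (Nat.lt_succ_diag_r n)). assert (Hq := hq n (Nat.lt_succ_diag_r n)).
    unfold Cdiv. apply Ccont_mult.
    + apply Ccont_RtoC. apply cp_exp. apply cp_div. apply cp_mult. apply cp_id.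
      apply cp_mult. apply cp_id. apply cp_const. apply cp_const.
      assert (Hl := ln_neg _ Hq). lra.
    + apply Ccont_inv. apply Ccont_qpoch; auto.
      apply Cneq0. apply (qpoch_pos _ (y n)); auto. rewrite Cmod_yexpi; lra.
Qed.

Lemma theF_0 n y q
  (hy : forall l, (l < n)%nat -> 0 < y l < 1)
  (hq : forall l, (l < n)%nat -> 0 < q l < 1) : exists r, 0 < r /\ theF n y q 0 = RtoC r.
Proof.
  unfold theF. induction n; cbn [Cprod].
  - exists 1. split. lra. reflexivity.
  - destruct IHn as [r [Hr E]]. intros; apply hy; lia. intros; apply hq; lia.
    rewrite E.
    assert (Hy := hy n (Nat.lt_succ_diag_r n)). assert (Hq := hq n (Nat.lt_succ_diag_r n)).
    destruct (qpoch_real _ _ Hy Hq) as [Q1 Q2].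
    assert (E0 : (RtoC (y n) * expi 0)%C = RtoC (y n)).
    { unfold expi. rewrite cos_0, sin_0. apply injective_projections; simpl; ring. }
    rewrite E0, Q1.
    set (s := Re (qpoch (RtoC (y n)) (q n))) in *.
    assert (Hs : 0 < s) by (eapply Rlt_le_trans; [apply exp_pos|apply Q2]).
    exists (r * (exp (0 ^ 2 / (4 * ln (q n))) / s)). split.
    + apply Rmult_lt_0_compat; auto. apply Rdiv_lt_0_compat; auto. apply exp_pos.
    + apply injective_projections; simpl; field; lra.
Qed.

Lemma Rprod_le1 n f : (forall l, (l < n)%nat -> 0 <= f l <= 1) -> 0 <= Rprod n f <= 1.
Proof.
  induction n; simpl; intros H. lra.
  assert (A := H n (Nat.lt_succ_diag_r n)).
  assert (B : 0 <= Rprod n f <= 1) by (apply IHn; intros; apply H; lia).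
  split; nra.
Qed.

Theorem theorem2p1 (n : nat) (y q : nat -> R)
  (hy : forall l, (l < n)%nat -> 0 < y l < 1)
  (hq : forall l, (l < n)%nat -> 0 < q l < 1) :
  positive_definite (theF n y q) /\
  (forall (m : nat) (x : nat -> R),
     psd_matrix m (fun j k =>
       Cprod n (fun l =>
         (RtoC (exp ((x j - x k) ^ 2 / (4 * ln (q l))))
          / qpoch (RtoC (y l) * expi (x j - x k)) (q l))%C))) /\
  (forall x : R,
     Rprod n (fun l =>
       Re (qpoch (RtoC (y l)) (q l)) / Cmod (qpoch (RtoC (y l) * expi x) (q l))
       * exp (x ^ 2 / (4 * ln (q l)))) <= 1).
Proof.
  split; [|split].
  - split; [|split].
    + intros x. apply Ccont_continuous, theF_cont; auto.
    + destruct (theF_0 n y q hy hq) as [r [Hr E]]. rewrite E. simpl. split; lra.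
    + intros m x. apply (main_psd n y q hy hq m x).
  - intros m x. apply (main_psd n y q hy hq m x).
  - intros x. apply Rprod_le1. intros l Hl.
    assert (Hy := hy l Hl). assert (Hq := hq l Hl).
    assert (A := qpoch_real _ _ Hy Hq).
    assert (B := qpoch_mod_ge (RtoC (y l) * expi x) (y l) (q l) Hy Hq).
    rewrite Cmod_yexpi in B by lra. specialize (B (Rle_refl _)).
    assert (Hs : 0 < Re (qpoch (RtoC (y l)) (q l))) by (eapply Rlt_le_trans; [apply exp_pos|apply (proj2 A)]).
    assert (Hln := ln_neg _ Hq).
    assert (Ex : exp (x ^ 2 / (4 * ln (q l))) <= 1).
    { rewrite <- exp_0. apply exp_le_mono. unfold Rdiv.
      assert (0 <= x ^ 2) by apply pow2_ge_0.
      assert (/ (4 * ln (q l)) < 0) by (apply Rinv_lt_0_compat; lra). nra. }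
    assert (Ep := exp_pos (x ^ 2 / (4 * ln (q l)))).
    assert (R1 : 0 <= Re (qpoch (RtoC (y l)) (q l)) / Cmod (qpoch (RtoC (y l) * expi x) (q l)) <= 1).
    { split. apply Rdiv_le_0_compat; lra.
      apply (Rmult_le_reg_r (Cmod (qpoch (RtoC (y l) * expi x) (q l)))). lra.
      unfold Rdiv. rewrite Rmult_assoc, Rinv_l by lra. lra. }
    split; nra.
Qed.
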